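(* In the Truthful Interval Covering setting with $n$ agents and unit-length intervals, every randomized mechanism that is a convex combination of $k$-th ordered statistic mechanisms has approximation ratio at least $3/2$, i.e., $\sup_{\mathcal{I}} \mathbb{E}[\mathrm{SC}(\mathcal{M}(\mathcal{I}))]/\min_C\mathrm{SC}(C)\ge 3/2$.
   Context: There are $n$ agents; agent $i$ has an interval $I_i=[s_i,s_i+1]$ of length $1$; an instance is $\mathcal{I}=(I_1,\dots,I_n)$. A unit covering interval $C$ is placed; $\mathrm{cost}_i(C)=1-|I_i\cap C|$ ($|\cdot|$ = length), $\mathrm{SC}(C)=\sum_i\mathrm{cost}_i(C)$, minimum over all unit intervals $C$. The $k$-th ordered statistic mechanism places $C$ at $[s_{(k)},s_{(k)}+1]$, where $s_{(k)}$ is the $k$-th smallest left endpoint. A convex combination of such mechanisms chooses index $k$ with a fixed probability $p_k$ (with $\sum_k p_k=1$, independent of the instance) and then applies the $k$-th ordered statistic mechanism. *)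

(* Defs.v *)
From HB Require Import structures.
From mathcomp Require Import all_boot all_order all_algebra.
From mathcomp Require Import reals.
Set Implicit Arguments. Unset Strict Implicit. Unset Printing Implicit Defensive.
Import Order.TTheory GRing.Theory Num.Theory.
Local Open Scope ring_scope.

Section Defs.
Variable R : realType.

Definition overlap (a b : R) : R :=
  Num.max 0 (Num.min (a + 1) (b + 1) - Num.max a b).

(* cost_i(C) = 1 - |I_i ∩ C|, with I_i = [si, si+1], C = [c, c+1] *)
Definition icost (si c : R) : R := 1 - overlap si c.

Definition SC (n : nat) (s : 'I_n -> R) (c : R) : R :=
  \sum_(i < n) icost (s i) c.

(* (k+1)-th smallest left endpoint (k is 0-based) *)
Definition order_stat (n : nat) (s : 'I_n -> R) (k : nat) : R :=
  nth 0 (sort <=%R [seq s i | i <- enum 'I_n]) k.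

(* expected social cost of the convex combination with probabilities q
   (q k = probability of the (k+1)-th ordered statistic mechanism) *)
Definition exp_SC (n : nat) (q : 'I_n -> R) (s : 'I_n -> R) : R :=
  \sum_(k < n) q k * SC s (order_stat s k).

End Defs.

(* Main.v *)
Require Import Defs.
From HB Require Import structures.
From mathcomp Require Import all_boot all_order all_algebra.
From mathcomp Require Import reals.
From mathcomp Require Import ring lra zify.
Import Order.TTheory GRing.Theory Num.Theory.
Local Open Scope ring_scope.

Section Aux.
Variable R : realType.

Lemma maxP' (x y : R) : x <= Num.max x y /\ y <= Num.max x y /\
  (Num.max x y = x \/ Num.max x y = y).
Proof. case: (leP x y) => h; split; try split; try lra; by [left|right]. Qed.

Lemma minP' (x y : R) : Num.min x y <= x /\ Num.min x y <= y /\
  (Num.min x y = x \/ Num.min x y = y).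
Proof. case: (leP x y) => h; split; try split; try lra; by [left|right]. Qed.

Lemma overlap_bounds (a c : R) : 0 <= overlap a c /\ overlap a c <= 1 /\
  overlap a c <= Num.max 0 (a + 1 - c) /\ overlap a c <= Num.max 0 (c + 1 - a).
Proof.
rewrite /overlap.
have [h1 [h2 h3]] := maxP' a c.
have [g1 [g2 g3]] := minP' (a + 1) (c + 1).
set M := Num.max a c in h1 h2 h3 *; set N := Num.min _ _ in g1 g2 g3 *.
have [k1 [k2 k3]] := maxP' 0 (N - M).
have [l1 [l2 l3]] := maxP' 0 (a + 1 - c).
have [m1 [m2 m3]] := maxP' 0 (c + 1 - a).
split; first lra.
case: k3 => ->; first lra.
split; lra.
Qed.

Lemma overlap_far (a b c : R) : a + 1 <= b -> overlap a c + overlap b c <= 1.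
Proof.
move=> hab.
have [p1 [p2 [p3 p4]]] := overlap_bounds a c.
have [q1 [q2 [q3 q4]]] := overlap_bounds b c.
have [l1 [l2 l3]] := maxP' 0 (a + 1 - c).
have [m1 [m2 m3]] := maxP' 0 (c + 1 - b).
case: l3 => l3; rewrite l3 in p3; first lra.
case: m3 => m3; rewrite m3 in q4; lra.
Qed.

Lemma overlap_same (a : R) : overlap a a = 1.
Proof. by rewrite /overlap minxx maxxx addrAC subrr add0r; apply/max_idPr; exact: ler01. Qed.

Lemma overlapC (a b : R) : overlap a b = overlap b a.
Proof. by rewrite /overlap (maxC a b) (minC (a + 1)). Qed.

Lemma overlap_nat0 (a b : nat) : (a < b)%N -> overlap (a%:R : R) b%:R = 0.
Proof.
move=> hab.
have [p1 _] := overlap_bounds (a%:R : R) b%:R.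
have h1 : (a%:R : R) + 1 <= b%:R by rewrite natr1 ler_nat.
have := overlap_far _ _ (b%:R) h1; rewrite overlap_same /=; lra.
Qed.

Lemma icost_nat (a b : nat) : icost (a%:R : R) b%:R = (a != b)%:R.
Proof.
rewrite /icost; case: (ltngtP a b) => h.
- by rewrite overlap_nat0 // subr0.
- by rewrite overlapC overlap_nat0 // subr0.
- by rewrite h overlap_same subrr.
Qed.


Lemma order_stat_mono (n : nat) (g : nat -> nat)
  (hm : forall a b, (a <= b)%N -> (g a <= g b)%N) (k : 'I_n) :
  order_stat (fun i : 'I_n => (g i)%:R : R) k = (g k)%:R.
Proof.
rewrite /order_stat.
have -> : [seq ((g (nat_of_ord i))%:R : R) | i <- enum 'I_n]
    = map (fun j => (g j)%:R : R) (iota 0 n).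
  by rewrite -val_enum_ord -map_comp.
rewrite sorted_sort; last first.
  apply: (homo_sorted (e := leq)); last first.
    by apply: (sub_sorted _ (iota_ltn_sorted 0 n)) => a b /ltnW.
  by move=> a b /hm; rewrite ler_nat.
  exact: le_trans.
by rewrite (nth_map 0%N) ?size_iota // nth_iota.
Qed.

Lemma SC_nat (n : nat) (g : nat -> nat) (x : nat) :
  SC (fun i : 'I_n => (g i)%:R : R) x%:R = \sum_(i < n) ((g i != x)%:R : R).
Proof. by apply: eq_bigr => i _; rewrite icost_nat. Qed.

Lemma count_neq (m : nat) (j : 'I_m) :
  \sum_(i < m) (((i : nat) != j)%:R : R) = (m.-1)%:R.
Proof.
rewrite (bigD1 j) //= eqxx add0r.
rewrite (eq_bigr (fun _ => 1)); last first.
  by move=> i hi; rewrite (inj_eq val_inj) hi.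
by rewrite sumr_const cardC1 card_ord.
Qed.

Lemma SC_lower (m : nat) (g : nat -> nat)
  (hg : forall i, (i < m)%N -> (g i < g (m + i))%N) (c : R) :
  m%:R <= SC (fun i : 'I_(m + m) => (g i)%:R : R) c.
Proof.
rewrite /SC big_split_ord /= -big_split /=.
have -> : (m%:R : R) = \sum_(i < m) (1 : R) by rewrite sumr_const card_ord.
apply: ler_sum => i _.
have h : ((g i)%:R : R) + 1 <= (g (m + i))%:R by rewrite natr1 ler_nat hg.
have := overlap_far _ _ c h; rewrite /icost; lra.
Qed.

End Aux.

Definition gA (m j : nat) : nat := if (j < m)%N then 0%N else (j - m).+1.
Definition gB (m j : nat) : nat := if (j < m)%N then j else m.

Lemma gA_l m (i : 'I_m) : gA m i = 0%N.
Proof. by rewrite /gA ltn_ord. Qed.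
Lemma gA_r m (i : 'I_m) : gA m (m + i) = i.+1.
Proof. by rewrite /gA ltnNge leq_addr /= addKn. Qed.
Lemma gB_l m (i : 'I_m) : gB m i = i.
Proof. by rewrite /gB ltn_ord. Qed.
Lemma gB_r m (i : 'I_m) : gB m (m + i) = m.
Proof. by rewrite /gB ltnNge leq_addr. Qed.

Lemma gA_mono m a b : (a <= b)%N -> (gA m a <= gA m b)%N.
Proof.
rewrite /gA => hab; case: ifP => ha //; case: ifP => hb.
  by move/negbT: ha; rewrite -leqNgt => ha; move: (leq_trans ha hab); rewrite leqNgt hb.
by rewrite ltnS leq_sub2r.
Qed.

Lemma gB_mono m a b : (a <= b)%N -> (gB m a <= gB m b)%N.
Proof.
rewrite /gB => hab; case: ifP => ha; case: ifP => hb //.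
- by apply: ltnW.
- by move/negbT: ha; rewrite -leqNgt => ha; move: (leq_trans ha hab); rewrite leqNgt hb.
Qed.

Section Main.
Variable R : realType.

Lemma sum_ones m (P : 'I_m -> bool) : (forall i, P i) ->
  \sum_(i < m) ((P i)%:R : R) = m%:R.
Proof.
move=> h; rewrite (eq_bigr (fun _ => 1)); first by rewrite sumr_const card_ord.
by move=> i _; rewrite h.
Qed.

Lemma sum_zeros m (P : 'I_m -> bool) : (forall i, ~~ P i) ->
  \sum_(i < m) ((P i)%:R : R) = 0.
Proof. by move=> h; apply: big1 => i _; rewrite (negbTE (h i)). Qed.

Definition sA m : 'I_(m + m) -> R := fun i => (gA m i)%:R.
Definition sB m : 'I_(m + m) -> R := fun i => (gB m i)%:R.

Lemma SCA0 m : SC (sA m) 0%:R = m%:R.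
Proof.
rewrite /sA SC_nat big_split_ord /=.
rewrite sum_zeros; last by move=> i; rewrite gA_l.
by rewrite add0r sum_ones // => i; rewrite gA_r.
Qed.

Lemma SCA1 m (k : 'I_m) : SC (sA m) (k.+1)%:R = m%:R + (m.-1)%:R.
Proof.
rewrite /sA SC_nat big_split_ord /=.
rewrite sum_ones; last by move=> i; rewrite gA_l.
congr (_ + _); rewrite -(@count_neq R _ k); apply: eq_bigr => i _.
by rewrite gA_r eqSS.
Qed.

Lemma SCB m (k : 'I_m) : SC (sB m) k%:R = (m.-1)%:R + m%:R.
Proof.
rewrite /sB SC_nat big_split_ord /=.
rewrite [X in _ + X]sum_ones; last by move=> i; rewrite gB_r gtn_eqF.
congr (_ + _); rewrite -(@count_neq R _ k); apply: eq_bigr => i _.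
by rewrite gB_l.
Qed.

Lemma SCBm m : SC (sB m) m%:R = m%:R.
Proof.
rewrite /sB SC_nat big_split_ord /=.
rewrite [X in _ + X]sum_zeros; last by move=> i; rewrite gB_r eqxx.
by rewrite addr0 sum_ones // => i; rewrite gB_l ltn_eqF.
Qed.

End Main.

Lemma EA (R : realType) m (q : 'I_(m + m) -> R) :
  exp_SC q (sA R m) = (\sum_(k < m) q (lshift m k)) * m%:R
                    + (\sum_(k < m) q (rshift m k)) * (m%:R + (m.-1)%:R).
Proof.
rewrite /exp_SC big_split_ord /= !mulr_suml; congr (_ + _); apply: eq_bigr => k _.
- by rewrite /sA (@order_stat_mono R (m+m) (gA m) (@gA_mono m) (lshift m k)) gA_l SCA0.
- by rewrite /sA (@order_stat_mono R (m+m) (gA m) (@gA_mono m) (rshift m k)) gA_r SCA1.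
Qed.

Lemma EB (R : realType) m (q : 'I_(m + m) -> R) :
  exp_SC q (sB R m) = (\sum_(k < m) q (lshift m k)) * ((m.-1)%:R + m%:R)
                    + (\sum_(k < m) q (rshift m k)) * m%:R.
Proof.
rewrite /exp_SC big_split_ord /= !mulr_suml; congr (_ + _); apply: eq_bigr => k _.
- by rewrite /sB (@order_stat_mono R (m+m) (gB m) (@gB_mono m) (lshift m k)) gB_l SCB.
- by rewrite /sB (@order_stat_mono R (m+m) (gB m) (@gB_mono m) (rshift m k)) gB_r SCBm.
Qed.

Theorem theorem6 (R : realType) (p : forall n : nat, 'I_n -> R)
  (hp0 : forall (n : nat) (k : 'I_n), 0 <= p n k)
  (hp1 : forall n : nat, (0 < n)%N -> \sum_(k < n) p n k = 1) :
  forall r : R, r < 3 / 2 ->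
    exists (n : nat) (s : 'I_n -> R) (c : R),
      (forall c' : R, SC s c <= SC s c') /\ r * SC s c < exp_SC (p n) s.
Proof.
move=> r hr.
have h3 : 0 < 3 - 2 * r by lra.
set x := 1 / (3 - 2 * r).
have x0 : 0 <= x by rewrite /x divr_ge0 // ltW.
set b := Num.bound x.
have hb := archi_boundP x0; rewrite -/b in hb.
set m := b.+1.
have hM : 1 < (3 - 2 * r) * (b%:R + 1).
  have e : (3 - 2 * r) * x = 1 by rewrite /x mulrC divfK // gt_eqF.
  by rewrite -[X in X < _]e ltr_pM2l //; lra.
set q := p (m + m).
have hq : \sum_(k < m) q (lshift m k) + \sum_(k < m) q (rshift m k) = 1.
  by rewrite /q -(hp1 (m + m)) // big_split_ord.
set F := \sum_(k < m) q (lshift m k) in hq.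
set G := \sum_(k < m) q (rshift m k) in hq.
have hmR : (m%:R : R) = b%:R + 1 by rewrite /m -natr1.
have hm1 : m.-1 = b by [].
case: (ltrP (r * m%:R) (exp_SC q (sA R m))) => hA.
  exists (m + m), (sA R m), 0%:R; split.
    move=> c'; rewrite SCA0; apply: SC_lower => i hi.
    by rewrite /gA hi; case: ifP => //; lia.
  by rewrite SCA0.
exists (m + m), (sB R m), m%:R; split.
  move=> c'; rewrite SCBm; apply: SC_lower => i hi.
  by rewrite /gB hi; case: ifP => //; lia.
rewrite SCBm; move: hA; rewrite EA EB -/F -/G hm1 hmR => hA.
set B := (b%:R : R) in hA hM *.
have e : F * (B + (B + 1)) + G * (B + 1) = (F + G) * (3 * B + 2) - (F * (B+1) + G * (B + 1 + B)).
  ring.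
rewrite e hq mul1r.
set Y := F * (B + 1) + G * (B + 1 + B) in hA *.
set rB := r * (B + 1) in hA *.
have : 2 * rB < 3 * B + 2 by rewrite /rB; lra.
lra.
Qed.
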